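(* Let $k,m,n,r$ be integers with $n\ge 3$, $2\le m\le n$, $0\le r\le n-1$ and $1\le k\le\left\lfloor\frac{m}{2}\right\rfloor$. Then the sum of the elements of the multiset $\sigma_k(J^r_{n,m})$ equals $nk$ if $k<\frac{m}{2}$ or $n$ is even, and equals $(n-1)k$ if $k=\frac{m}{2}$ and $n$ is odd.
   Context: The cycle $C_n$ ($n\ge 3$) has vertex set $\{0,1,\dots,n-1\}$ with $i$ adjacent to $i+1 \bmod n$. For vertices $u,v$, $d(u,v)$ is the geodesic (shortest path) distance. For a set $A=\{a_0<a_1<\dots<a_{m-1}\}$ of vertices and $a_i,a_j\in A$, $\mathrm{span}_A(a_i,a_j)$ is the least positive integer congruent to $j-i$ modulo $m$. For $1\le k\le m-1$, $\sigma_k(A)$ is the multiset $[\,d(u,v): u,v\in A,\ u\ne v,\ \mathrm{span}_A(u,v)=k\,]$ taken over ordered pairs $(u,v)$. For integers $1\le m\le n$ and $0\le r\le n-1$, $J^r_{n,m}=\left\{\left\lfloor\frac{ni+r}{m}\right\rfloor : 0\le i<m\right\}$. *)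

(* Defs.v *)
From mathcomp Require Import all_boot.
Set Implicit Arguments. Unset Strict Implicit. Unset Printing Implicit Defensive.

Definition cdist (n u v : nat) : nat :=
  minn ((u + n - v) %% n) ((v + n - u) %% n).

(* J^r_{n,m} = { floor((n i + r)/m) : 0 <= i < m }, as a list (possibly
   with repetitions; it is turned into a set below). *)
Definition Jset (n m r : nat) : seq nat :=
  [seq (n * i + r) %/ m | i <- iota 0 m].

Definition sorted_elems (A : seq nat) : seq nat := sort leq (undup A).

(* span of (a_i, a_j) in a set of size m: the least positive integer
   congruent to j - i modulo m (for i, j < m). *)
Definition span_idx (m i j : nat) : nat :=
  let s := (j + m - i) %% m in if s == 0 then m else s.

(* sigma_k(A) in C_n: the multiset (as a list) of d(u,v) over ordered pairs
   u != v of elements of A with span_A(u,v) = k. *)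
Definition sigma (n k : nat) (A : seq nat) : seq nat :=
  let s := sorted_elems A in
  let m := size s in
  [seq cdist n (nth 0 s ij.1) (nth 0 s ij.2)
  | ij <- [seq (i, j) | i <- iota 0 m, j <- iota 0 m]
  & (ij.1 != ij.2) && (span_idx m ij.1 ij.2 == k)].

(* Main.v *)
Require Import Defs.
From mathcomp Require Import all_boot.
From mathcomp Require Import zify.

Lemma modadd_small a d : d <= a -> a < d + d -> a %% d = a - d.
Proof.
move=> h1 h2. have -> : a = (a - d) + d by lia.
rewrite modnDr modn_small; lia.
Qed.

Lemma b_bounds n m r x : 0 < m ->
  m * ((n * x + r) %/ m) <= n * x + r < m * ((n * x + r) %/ m) + m.
Proof.
move=> m0. have e := divn_eq (n * x + r) m. have := ltn_pmod (n * x + r) m0.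
rewrite mulnC. lia.
Qed.

Lemma bS n m r x : 0 < m -> (n * (x + m) + r) %/ m = (n * x + r) %/ m + n.
Proof.
move=> m0. have -> : n * (x + m) + r = n * m + (n * x + r) by rewrite mulnDr; lia.
by rewrite divnMDl // addnC.
Qed.

Lemma b_lt n m r x : 0 < m -> m <= n -> (n * x + r) %/ m < (n * x.+1 + r) %/ m.
Proof.
move=> m0 mn. have : (1 * m + (n * x + r)) %/ m <= (n * x.+1 + r) %/ m.
  apply: leq_div2r. rewrite mulnS. lia.
by rewrite divnMDl.
Qed.

Lemma tele (f : nat -> nat) m k :
  \sum_(i < m) f (i + k.+1) + f k = \sum_(i < m) f (i + k) + f (m + k).
Proof.
have h1 := big_ord_recl m (fun i : 'I_m.+1 => f (i + k)).
have h2 := big_ord_recr m (fun i : 'I_m.+1 => f (i + k)).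
rewrite /= in h1 h2. rewrite -h2 h1 addnC. congr (_ + _).
by apply: eq_bigr => i _; rewrite /bump /= add1n addSnnS.
Qed.

Lemma tele2 n m r k : 0 < m ->
  \sum_(i < m) (n * (i + k) + r) %/ m = \sum_(i < m) (n * i + r) %/ m + k * n.
Proof.
move=> m0. elim: k => [|k IH].
  by rewrite mul0n addn0; apply: eq_bigr => i _; rewrite addn0.
have := tele (fun x => (n * x + r) %/ m) m k. rewrite /= (addnC m) bS //.
rewrite IH mulSn. move: (\sum_(i < m) _) => A. move: (\sum_(i < m) _) => B. move: ((n * k + r) %/ m) => C. move: (k * n) => E. lia.
Qed.

Lemma sorted_J n m r : 0 < m -> m <= n -> sorted_elems (Jset n m r) = Jset n m r.
Proof.
move=> m0 mn.
have hs : sorted ltn (Jset n m r).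
  rewrite /Jset. have hh : {homo (fun x => (n * x + r) %/ m) : x y / x < y >-> x < y}.
  apply: (@homo_ltn nat (fun x => (n * x + r) %/ m) (fun a b => a < b)).
    by move=> y x z; apply: ltn_trans.
  by move=> i; apply: b_lt.
  exact: (homo_sorted hh (iota 0 m) (iota_ltn_sorted 0 m)).
move: hs; rewrite ltn_sorted_uniq_leq => /andP[u s].
by rewrite /sorted_elems undup_id // sorted_sort //; apply: leq_trans.
Qed.

Lemma cdist_i n m r k i : 0 < m -> m <= n -> i < m -> k < m ->
  0 < (n * (i + k) + r) %/ m - (n * i + r) %/ m < n ->
  cdist n ((n * i + r) %/ m) ((n * ((i + k) %% m) + r) %/ m) =
  minn (n - ((n * (i + k) + r) %/ m - (n * i + r) %/ m))
       ((n * (i + k) + r) %/ m - (n * i + r) %/ m).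
Proof.
move=> m0 mn im km /andP[D0 Dn].
have mono : (n * i + r) %/ m <= (n * (i + k) + r) %/ m.
  apply: leq_div2r. rewrite mulnDr. lia.
rewrite /cdist. case: (ltnP (i + k) m) => h.
  rewrite (modn_small h).
  move: D0 Dn mono.
  move: ((n * i + r) %/ m) => u; move: ((n * (i + k) + r) %/ m) => v => D0 Dn mono.
  have -> : u + n - v = n - (v - u) by lia.
  have -> : v + n - u = (v - u) + n by lia.
  rewrite modnDr !modn_small //; lia.
rewrite (@modadd_small (i + k) m) //; last by lia.
have := bS n m r (i + k - m) m0. rewrite subnK //.
move: D0 Dn mono.
move: ((n * i + r) %/ m) => u; move: ((n * (i + k) + r) %/ m) => v.
move: ((n * (i + k - m) + r) %/ m) => w => D0 Dn mono e.
have -> : u + n - w = (n - (v - u)) + n by lia.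
have -> : w + n - u = (v - u) by lia.
rewrite modnDr !modn_small //; lia.
Qed.

Lemma span_char m i j k : i < m -> j < m -> 0 < k < m ->
  ((i != j) && (span_idx m i j == k)) = (j == (i + k) %% m).
Proof.
move=> im jm /andP[k0 km].
have -> : (i + k) %% m = if i + k < m then i + k else i + k - m.
  case: ltnP => h; first by rewrite modn_small.
  by rewrite modadd_small //; lia.
rewrite /span_idx.
have -> : (j + m - i) %% m = if i <= j then j - i else j + m - i.
  case: leqP => h.
    by rewrite modadd_small //; lia.
  by rewrite modn_small //; lia.
case: (leqP i j) => h1; case: (ltnP (i + k) m) => h2; case: ifP => /eqP h3;
  apply/idP/idP => [/andP[/eqP a /eqP b]|/eqP c];
  try (apply/eqP; lia); try (apply/andP; split; apply/eqP; lia).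

Qed.

Lemma sum_reduce n m r k : 0 < m -> m <= n -> 0 < k < m ->
  sumn (sigma n k (Jset n m r)) =
  \sum_(i < m) cdist n ((n * i + r) %/ m) ((n * ((i + k) %% m) + r) %/ m).
Proof.
move=> m0 mn kk.
rewrite /sigma sorted_J // size_map size_iota sumnE big_map big_filter big_mkcond big_allpairs /=.
have -> : iota 0 m = index_iota 0 m by rewrite /index_iota subn0.
rewrite big_mkord; apply: eq_bigr => i _.
rewrite big_mkord -big_mkcond /=.
have jlt : (i + k) %% m < m by apply: ltn_pmod.
rewrite (big_pred1 (Ordinal jlt)) /=.
  by rewrite /Jset !(nth_map 0) ?size_iota ?nth_iota.
move=> j /=. by rewrite span_char.
Qed.

Lemma Dbounds n m r k i : 0 < m ->
  n * k < m * ((n * (i + k) + r) %/ m - (n * i + r) %/ m) + m /\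
  m * ((n * (i + k) + r) %/ m - (n * i + r) %/ m) < n * k + m.
Proof.
move=> m0.
have mono : (n * i + r) %/ m <= (n * (i + k) + r) %/ m.
  apply: leq_div2r. rewrite mulnDr. lia.
have := b_bounds n m r i m0. have := b_bounds n m r (i + k) m0.
rewrite mulnBr mulnDr.
move: mono; move: ((n * i + r) %/ m) => u; move: ((n * (i + k) + r) %/ m) => v => mono.
have : m * u <= m * v by rewrite leq_mul2l mono orbT.
move: (m * u) (m * v) (n * i) (n * k) => U V NI NK. lia.
Qed.

Theorem mainTheorem2 (k m n r : nat) :
  3 <= n -> 2 <= m -> m <= n -> r <= n - 1 -> 1 <= k -> k <= m./2 ->
  ((2 * k < m \/ ~~ odd n) -> sumn (sigma n k (Jset n m r)) = n * k) /\
  (2 * k = m -> odd n -> sumn (sigma n k (Jset n m r)) = (n - 1) * k).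
Proof.
move=> n3 m2 mn rn k1 km.
have m0 : 0 < m by lia.
have k2 : 2 * k <= m by have := odd_double_half m; rewrite -muln2; lia.
have kk : 0 < k < m by lia.
have kltm : k < m by lia.
rewrite sum_reduce //.
have mono i : (n * i + r) %/ m <= (n * (i + k) + r) %/ m.
  apply: leq_div2r. rewrite mulnDr. lia.
have Dpos i : 0 < (n * (i + k) + r) %/ m - (n * i + r) %/ m.
  have [h1 _] := Dbounds n m r k i m0.
  move: h1; move: ((n * (i + k) + r) %/ m - (n * i + r) %/ m) => D h1.
  have : n * 1 <= n * k by rewrite leq_mul2l k1 orbT.
  case: D h1 => [|D] h1 h2; last by [].
  rewrite muln0 in h1. lia.
split.
  move=> H.
  have half i : 2 * ((n * (i + k) + r) %/ m - (n * i + r) %/ m) <= n.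
    have [h1 h2] := Dbounds n m r k i m0.
    move: h1 h2; move: ((n * (i + k) + r) %/ m - (n * i + r) %/ m) => D h1 h2.
    have [hk|hk] : 2 * k < m \/ m = 2 * k by lia.
      have h3 : n * (2 * k).+1 <= n * m by rewrite leq_mul2l hk orbT.
      have : m * (2 * D) < m * n.+1 by lia.
      by rewrite ltn_pmul2l.
    case: H => H; first lia.
    have := odd_double_half n. rewrite (negbTE H) add0n -muln2 => en.
    have k0 : 0 < k by lia.
    subst m.
    have : k * n < k * (2 * D + 2) by lia.
    rewrite ltn_pmul2l // => a.
    have : k * (2 * D) < k * (n + 2) by lia.
    rewrite ltn_pmul2l // => b. lia.
  have -> : n * k = \sum_(i < m) ((n * (i + k) + r) %/ m - (n * i + r) %/ m).
    rewrite sumnB; last by move=> i _; apply: mono.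
    by rewrite tele2 // mulnC addnC addnK.
  apply: eq_bigr => i _.
  rewrite cdist_i ?ltn_ord //; last by rewrite Dpos /=; have := half i; have := Dpos i; lia.
  have := half i. move: ((n * (i + k) + r) %/ m - (n * i + r) %/ m) => D h.
  apply/minn_idPr. lia.
move=> e on.
have := odd_double_half n. rewrite on -muln2 => en.
have k0 : 0 < k by lia.
have val (i : 'I_m) : cdist n ((n * i + r) %/ m) ((n * ((i + k) %% m) + r) %/ m) = n./2.
  have [h1 h2] := Dbounds n m r k i m0.
  have := Dpos i.
  rewrite cdist_i ?ltn_ord //; last first.
    rewrite Dpos /=. move: h1 h2 (Dpos i).
    move: ((n * (i + k) + r) %/ m - (n * i + r) %/ m) => D h1 h2 h3.
    subst m.
    have : k * (2 * D) < k * (n + 2) by lia.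
    rewrite ltn_pmul2l // => b. lia.
  move: h1 h2; move: ((n * (i + k) + r) %/ m - (n * i + r) %/ m) => D h1 h2 h3.
  subst m.
  have : k * n < k * (2 * D + 2) by lia.
  rewrite ltn_pmul2l // => a.
  have : k * (2 * D) < k * (n + 2) by lia.
  rewrite ltn_pmul2l // => b.
  have [hD|hD] : D = n./2 \/ D = n./2.+1 by lia.
    rewrite hD. apply/minn_idPr. lia.
  rewrite hD. rewrite (minn_idPl _). lia. lia.
under eq_bigr => i _ do rewrite val.
rewrite sum_nat_const card_ord. lia.
Qed.
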